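(* Let $N\ge 1$ and let $\mathcal H_1,\dots,\mathcal H_N$ be finite-dimensional complex Hilbert spaces. Let $B$ be a finite set with $|B|=\prod_{j=1}^N \dim \mathcal H_j$ and let $(\psi_b)_{b\in B}$ be an orthonormal basis of $\bigotimes_{j=1}^N \mathcal H_j$. (i) If there exists an LOCC protocol (in the sense of the context; its local instruments and global classical operations are allowed to be unnormalised) which perfectly distinguishes the family $(\psi_b)_{b\in B}$, then no $\psi_b$ is entangled, i.e. every $\psi_b$ is a product state $\psi_b=\psi_{b,1}\otimes\cdots\otimes\psi_{b,N}$ with $\psi_{b,i}\in\mathcal H_i$. (ii) Conversely, if every $\psi_b$ is a product state, then there exists a unital LOCC protocol (possibly involving unnormalised local instruments/global classical operations) which perfectly distinguishes the family $(\psi_b)_{b\in B}$.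
   Context: Processes: quantum systems are finite-dimensional Hilbert spaces (acting on density operators), classical systems are finite sets $X$ (states are vectors in $(\mathbb R^{+})^X$). A process is a completely positive (CP) map between tensor products of quantum and classical systems, classical parts being treated as diagonal/commutative; a purely classical process $X\to Y$ is a $Y\times X$ matrix with non-negative real entries. A process is normalised if it is trace-preserving (on classical systems: its matrix is column-stochastic); ''unnormalised'' means no such requirement is imposed. A process is unital if it maps the identity operator on each quantum input (and the all-ones vector on each classical input) to the identity operator on each quantum output (resp. the all-ones vector on each classical output). Local instrument for party $i$: a CP process with one classical input and one quantum input of party $i$, and one classical output and one quantum output of party $i$ (the quantum systems of party $i$ being finite-dimensional Hilbert spaces, the first quantum input being $\mathcal H_i$). LOCC protocol with $R\ge1$ rounds: in each round $r$, first a global classical operation (a non-negative matrix) is applied, taking the classical outputs of all parties' local instruments from round $r-1$ to classical inputs of all parties for round $r$ (for $r=1$ this is a global classical state, with no inputs), and then each party $i$ applies a local instrument $M_i^{(r)}$ to its classical input and its current quantum system; the non-classical systems are untouched by the global classical operations. After round $R$, a global classical post-processing (non-negative matrix) maps the classical outputs of the parties' last instruments to a classical output in $B$, and the remaining quantum systems are discarded (traced out). Such a protocol perfectly distinguishes $(\psi_b)_{b\in B}$ if, for every $b\in B$, applying it to the input state $|\psi_b\rangle\langle\psi_b|$ on $\bigotimes_j\mathcal H_j$ yields exactly the point distribution $\delta_b$ on $B$. The protocol is called unital if the overall process it implements is unital. *)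

(* Defs.v *)
(* Finite-dimensional quantum systems are modelled by a finite
   basis index type I (the Hilbert space is I -> C); classical systems are
   finite types X.  Scalars live in an arbitrary numClosedFieldType C
   (e.g. the complex numbers); "0 <= x" in C means x is a nonnegative real. *)
From HB Require Import structures.
From mathcomp Require Import all_boot all_order all_algebra.
Set Implicit Arguments. Unset Strict Implicit. Unset Printing Implicit Defensive.
Import Order.TTheory GRing.Theory Num.Theory.
Local Open Scope ring_scope.

Section QDefs.
Variable C : numClosedFieldType.

Definition vec (I : finType) := I -> C.
Definition op (I : finType) := I -> I -> C.

(* linear maps op I -> op J, given by their coefficients:
   (apply F rho) j j' = sum_{i,i'} F j j' i i' * rho i i' *)
Definition superop (I J : finType) := J -> J -> I -> I -> C.

Definition apply (I J : finType) (F : superop I J) (rho : op I) : op J :=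
  fun j j' => \sum_(i : I) \sum_(i' : I) F j j' i i' * rho i i'.

Definition inner (I : finType) (u v : vec I) : C := \sum_(i : I) (u i)^* * v i.

Definition psd (I : finType) (rho : op I) : Prop :=
  forall v : vec I, 0 <= \sum_(i : I) \sum_(i' : I) (v i)^* * rho i i' * v i'.

(* id_n (x) F acting on operators of 'I_n (x) I *)
Definition ampl (n : nat) (I J : finType) (F : superop I J)
  (rho : op ('I_n * I)%type) : op ('I_n * J)%type :=
  fun aj aj' => \sum_(i : I) \sum_(i' : I) F aj.2 aj'.2 i i' * rho (aj.1, i) (aj'.1, i').

Definition CP (I J : finType) (F : superop I J) : Prop :=
  forall (n : nat) (rho : op ('I_n * I)%type), psd rho -> psd (ampl F rho).

Definition trace (I : finType) (A : op I) : C := \sum_(i : I) A i i.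

Definition proj (I : finType) (v : vec I) : op I := fun i i' => v i * (v i')^*.

Definition idop (I : finType) : op I := fun i i' => (i == i')%:R.

Variable N : nat.

(* tensor product of the systems T i, i < N: basis = dependent tuples *)
Definition jt (T : 'I_N -> finType) : finType := {dffun forall i : 'I_N, T i}.

Definition tens (A Bt : 'I_N -> finType) (F : forall i, superop (A i) (Bt i))
  : superop (jt A) (jt Bt) :=
  fun b b' a a' => \prod_(i < N) F i (b i) (b' i) (a i) (a' i).

Definition is_product (H : 'I_N -> finType) (psi : vec (jt H)) : Prop :=
  exists phi : forall i, vec (H i), forall k : jt H, psi k = \prod_(i < N) phi i (k i).

Variable H : 'I_N -> finType.
Variable B : finType.

(* quantum system of party i before round r (rounds numbered from 0):
   H i before round 0, K i r after round r *)
Definition Qsys (K : 'I_N -> nat -> finType) (i : 'I_N) (r : nat) : finType :=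
  match r with 0 => H i | r'.+1 => K i r' end.

(* An LOCC protocol with nR.+1 rounds (rounds 0..nR), possibly unnormalised.
   In round r: a global classical operation (g0 for r = 0, G r' for r = r'.+1,
   a nonnegative matrix from the product of the parties' classical outputs of
   round r' to the product of their classical inputs of round r), then each
   party i applies its local instrument M i r, which has classical input X i r,
   quantum input Qsys i r, classical output Y i r, quantum output K i r; an
   instrument is a family of CP maps indexed by (classical in, classical out).
   Finally P post-processes the last classical outputs into B. *)
Unset Implicit Arguments.
Record LOCC := {
  nR : nat;
  K : 'I_N -> nat -> finType;
  X : 'I_N -> nat -> finType;
  Y : 'I_N -> nat -> finType;
  M : forall (i : 'I_N) (r : nat), X i r -> Y i r -> superop (Qsys K i r) (K i r);
  g0 : jt (fun i => X i 0) -> C;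
  G : forall r : nat, jt (fun i => X i r.+1) -> jt (fun i => Y i r) -> C;
  P : B -> jt (fun i => Y i nR) -> C;
  M_CP : forall (i : 'I_N) (r : nat) (x : X i r) (y : Y i r), CP (M i r x y);
  g0_ge0 : forall x, 0 <= g0 x;
  G_ge0 : forall r x y, 0 <= G r x y;
  P_ge0 : forall b y, 0 <= P b y
}.

(* unnormalised hybrid state after round r: for each joint classical outcome y
   of round r, an operator on the joint quantum system *)
Fixpoint lstate (p : LOCC) (rho : op (jt H)) (r : nat)
  : jt (fun i => Y p i r) -> op (jt (fun i => K p i r)) :=
  match r as r0 return jt (fun i => Y p i r0) -> op (jt (fun i => K p i r0)) with
  | 0 => fun y j j' =>
      \sum_(x : jt (fun i => X p i 0))
        g0 p x * apply (tens (fun i => M p i 0 (x i) (y i))) rho j j'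
  | r'.+1 => fun y j j' =>
      \sum_(x : jt (fun i => X p i r'.+1)) \sum_(y' : jt (fun i => Y p i r'))
        G p r' x y' *
        apply (tens (fun i => M p i r'.+1 (x i) (y i))) (lstate p rho r' y') j j'
  end.

Set Implicit Arguments.

(* the overall process: input operator on (x)_j H_j, output vector on B
   (remaining quantum systems traced out) *)
Definition LOCC_out (p : LOCC) (rho : op (jt H)) (b : B) : C :=
  \sum_(y : jt (fun i => Y p i (nR p))) P p b y * trace (lstate p rho (nR p) y).

Definition perfectly_distinguishes (p : LOCC) (psi : B -> vec (jt H)) : Prop :=
  forall b b' : B, LOCC_out p (proj (psi b)) b' = (b' == b)%:R.

(* unital: identity on the quantum input goes to the all-ones vector on B *)
Definition unital_LOCC (p : LOCC) : Prop :=
  forall b : B, LOCC_out p (@idop (jt H)) b = 1.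

Definition orthonormal_basis (psi : B -> vec (jt H)) : Prop :=
  (forall b b', inner (psi b) (psi b') = (b == b')%:R) /\
  (forall v : vec (jt H), exists c : B -> C,
      forall k, v k = \sum_(b : B) c b * psi b k).

End QDefs.

(* Main.v *)
Require Import Defs.
From HB Require Import structures.
From mathcomp Require Import all_boot all_order all_algebra.
From mathcomp Require Import ring.
From Stdlib Require Import ClassicalEpsilon.
Set Implicit Arguments. Unset Strict Implicit. Unset Printing Implicit Defensive.
Import Order.TTheory GRing.Theory Num.Theory.
Local Open Scope ring_scope.

Section Gen.
Variable C : numClosedFieldType.

Lemma psd_pull (I U : finType) (g : U -> I) (rho : op C I) :
  psd rho -> psd (fun u u' => rho (g u) (g u')).
Proof.
move=> Hr v.
set W := (fun i => \sum_(u | g u == i) v u).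
suff -> : \sum_u \sum_u' (v u)^* * rho (g u) (g u') * v u' =
  \sum_i \sum_i' (W i)^* * rho i i' * W i' by apply: Hr.
rewrite (partition_big g predT) //=; apply: eq_bigr => i _.
rewrite /W.
under [RHS]eq_bigr do rewrite rmorph_sum /= !mulr_suml.
rewrite [RHS]exchange_big /=.
apply: eq_bigr => u /eqP gu.
rewrite (partition_big g predT) //=; apply: eq_bigr => i' _.
rewrite mulr_sumr; apply: eq_bigr => u' /eqP gu'.
by rewrite gu gu'.
Qed.

Lemma psd_sum (I T : finType) (F : T -> op C I) :
  (forall t, psd (F t)) -> psd (fun i i' => \sum_t F t i i').
Proof.
move=> HF v.
have -> : \sum_i \sum_i' (v i)^* * (\sum_t F t i i') * v i' =
   \sum_t \sum_i \sum_i' (v i)^* * F t i i' * v i'.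
  rewrite [RHS]exchange_big /=; apply: eq_bigr => i _.
  rewrite [RHS]exchange_big /=; apply: eq_bigr => i' _.
  by rewrite mulr_sumr mulr_suml.
by apply: sumr_ge0 => t _; apply: HF.
Qed.

Lemma psd_diag (I : finType) (rho : op C I) a : psd rho -> 0 <= rho a a.
Proof.
move=> Hr; have := Hr (fun i => (i == a)%:R).
rewrite (bigD1 a) //= [X in _ + X]big1; last first.
  move=> i /negbTE ->; apply: big1 => i' _; by rewrite rmorph0 !mul0r.
rewrite addr0 (bigD1 a) //= [X in _ + X]big1; last first.
  by move=> i' /negbTE ->; rewrite mulr0.
by rewrite addr0 eqxx rmorph1 mul1r mulr1.
Qed.

Lemma psd_proj (I : finType) (v : vec C I) : psd (proj v).
Proof.
move=> w; rewrite /proj.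
have -> : \sum_i \sum_i' (w i)^* * (v i * (v i')^*) * w i' =
  (\sum_i (w i)^* * v i) * (\sum_i (w i)^* * v i)^*.
  rewrite mulr_suml; apply: eq_bigr => i _.
  rewrite rmorph_sum mulr_sumr; apply: eq_bigr => i' _.
  rewrite rmorphM /= conjCK; ring.
exact: mul_conjC_ge0.
Qed.


Lemma psd_ext (I : finType) (R R' : op C I) :
  (forall i i', R i i' = R' i i') -> psd R -> psd R'.
Proof.
move=> E HR v; have := HR v.
congr (_ <= _); apply: eq_bigr => i _; apply: eq_bigr => i' _; by rewrite E.
Qed.

Lemma sum4_swap (I I' J J' : finType) (F : I -> I' -> J -> J' -> C) :
  \sum_x \sum_x' \sum_j \sum_j' F x x' j j' =
  \sum_j \sum_j' \sum_x \sum_x' F x x' j j'.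
Proof.
under eq_bigr => x _ do (rewrite exchange_big /=; under eq_bigr => j _ do rewrite exchange_big /=).
rewrite exchange_big /=.
by under eq_bigr => j _ do rewrite exchange_big /=.
Qed.

Definition amplA (A I J : finType) (F : superop C I J) (rho : op C (A * I)%type)
  : op C (A * J)%type :=
  fun aj aj' => \sum_(i : I) \sum_(i' : I) F aj.2 aj'.2 i i' * rho (aj.1, i) (aj'.1, i').

Lemma CP_amplA (A I J : finType) (F : superop C I J) (rho : op C (A * I)%type) :
  CP F -> psd rho -> psd (amplA F rho).
Proof.
move=> HF Hr.
pose g := fun p : 'I_#|A| * I => (enum_val p.1, p.2).
have H1 := HF _ _ (psd_pull g Hr).
have H2 := psd_pull (fun p : A * J => (enum_rank p.1, p.2)) H1.
apply: psd_ext H2 => [[a j] [a' j']].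
by rewrite /ampl /amplA /g /= !enum_rankK.
Qed.

Definition cpos (I : finType) (Q : op C I) : Prop :=
  forall (A : finType) (rho : op C (A * I)%type), psd rho ->
    psd (fun a a' => \sum_x \sum_x' Q x x' * rho (a, x) (a', x')).

Definition dual (I J : finType) (F : superop C I J) (Q : op C J) : op C I :=
  fun x x' => \sum_j \sum_j' Q j j' * F j j' x x'.

Lemma cpos_dual (I J : finType) (F : superop C I J) (Q : op C J) :
  CP F -> cpos Q -> cpos (dual F Q).
Proof.
move=> HF HQ A rho Hr.
have := HQ A (amplA F rho) (CP_amplA HF Hr).
apply: psd_ext => a a'; rewrite /amplA /dual /=.
under eq_bigr => j _ do under eq_bigr => j' _ do rewrite mulr_sumr; 
under eq_bigr => j _ do under eq_bigr => j' _ do under eq_bigr => x _ do rewrite mulr_sumr.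
rewrite -sum4_swap; apply: eq_bigr => x _; apply: eq_bigr => x' _.
rewrite mulr_suml; apply: eq_bigr => j _; rewrite mulr_suml; apply: eq_bigr => j' _.
by rewrite mulrA.
Qed.

Lemma cpos_idop (I : finType) : cpos (@idop C I).
Proof.
move=> A rho Hr.
have := psd_sum (fun x => psd_pull (fun a : A => (a, x)) Hr).
apply: psd_ext => a a' /=; apply: eq_bigr => x _.
rewrite (bigD1 x) //= big1 => [|x' /negbTE]; last by rewrite /idop eq_sym => ->; rewrite mul0r.
by rewrite /idop eqxx mul1r addr0.
Qed.

End Gen.

Section Jt.
Variable C : numClosedFieldType.
Variable N : nat.
Variable T : 'I_N -> finType.

Definition upd (a : jt T) (i : 'I_N) (y : T i) : jt T :=
  finfun (dfwith (fun k => a k) y).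
Arguments upd : clear implicits.

Lemma upd_in a i y : upd a i y i = y.
Proof. by rewrite /upd ffunE dfwith_in. Qed.

Lemma upd_out a i y j : i != j -> upd a i y j = a j.
Proof. by move=> ne; rewrite /upd ffunE dfwith_out. Qed.

Definition agree (s : seq 'I_N) (x a : jt T) : bool :=
  [forall j, (j \notin s) ==> (x j == a j)].

Lemma agree_nil x a : agree [::] x a = (x == a).
Proof.
apply/forallP/eqP => [Hx|->]; last by move=> j; rewrite eqxx implybT.
by apply/ffunP => j; apply/eqP; have := Hx j.
Qed.

Lemma agree_upd s x a i y : i \notin s ->
  agree s x (upd a i y) = (x i == y) && agree (i :: s) x a.
Proof.
move=> nis; apply/forallP/andP => [Hx|[/eqP xi Hx] j].
  split; first by have := Hx i; rewrite nis upd_in.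
  apply/forallP => j; rewrite in_cons negb_or; apply/implyP => /andP[ne njs].
  by have := Hx j; rewrite njs upd_out // eq_sym.
apply/implyP => njs; case: (eqVneq i j) => [<-|ne].
  by rewrite upd_in xi.
rewrite upd_out //; have /forallP/(_ j) := Hx.
by rewrite in_cons negb_or eq_sym ne njs.
Qed.

Lemma agree_all x a : agree (index_enum 'I_N) x a.
Proof. by apply/forallP => j; rewrite mem_index_enum. Qed.

Lemma dist_agree (g : forall i, T i -> C) (s : seq 'I_N) (a : jt T) : uniq s ->
  \sum_(j : jt T | agree s j a) \prod_(i <- s) g i (j i) =
  \prod_(i <- s) \sum_(x : T i) g i x.
Proof.
elim: s a => [|i s IH] a.
  move=> _; rewrite big_nil (big_pred1 a) ?big_nil // => j.
  by rewrite agree_nil.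
move=> /= /andP[nis us].
rewrite big_cons (partition_big (fun j : jt T => j i) predT) //=.
rewrite big_distrl /=; apply: eq_bigr => y _.
rewrite -(IH (upd a i y) us) mulr_sumr.
apply: eq_big => [j|j /andP[_ /eqP <-]]; last by rewrite big_cons.
by rewrite agree_upd // andbC.
Qed.

Lemma dist_full (g : forall i, T i -> C) :
  \sum_(j : jt T) \prod_i g i (j i) = \prod_i \sum_(x : T i) g i x.
Proof.
case: (boolP [forall i, 0 < #|T i|]%N) => [/forallP Hc|].
  pose a : jt T := finfun (fun i => enum_val (Ordinal (Hc i))).
  rewrite -(dist_agree g a (index_enum_uniq _)).
  by apply: eq_bigl => j; rewrite agree_all.
rewrite negb_forall => /existsP[i]; rewrite -eqn0Ngt => /eqP Hi.
rewrite [RHS](bigD1 i) //= [X in X * _]big_pred0 ?mul0r; last first.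
  by move=> x; have := card0_eq Hi x; rewrite !inE.
apply: big1 => j _; exfalso; have := card0_eq Hi (j i); by rewrite inE.
Qed.


Lemma sum_delta2 (I J : finType) (x0 : I) (x1 : J) (Q : I -> J -> C) (b b' : bool) (P R : C) :
  \sum_y \sum_y' Q y y' * ((((x0 == y) && b && ((x1 == y') && b')))%:R * P * R) =
  Q x0 x1 * ((b && b')%:R * P * R).
Proof.
rewrite (bigD1 x0) //= [X in _ + X]big1 => [|y ny]; last first.
  by apply: big1 => y' _; rewrite eq_sym (negbTE ny) /= !mul0r mulr0.
rewrite addr0 (bigD1 x1) //= [X in _ + X]big1 => [|y' ny]; last first.
  by rewrite eq_sym (negbTE ny) andbF /= !mul0r mulr0.
by rewrite addr0 !eqxx.
Qed.

Definition contr (i : 'I_N) (Qi : op C (T i)) (R : op C (jt T)) : op C (jt T) :=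
  fun a a' => \sum_y \sum_y' Qi y y' * R (upd a i y) (upd a' i y').
Arguments contr : clear implicits.

Definition Psi (Q : forall i, op C (T i)) (s : seq 'I_N) (R : op C (jt T)) : op C (jt T) :=
  foldr (fun i acc => contr i (Q i) acc) R s.

Lemma psd_contr i (Qi : op C (T i)) R : cpos Qi -> psd R -> psd (contr i Qi R).
Proof.
move=> HQ HR.
have := HQ _ _ (psd_pull (fun p : jt T * T i => upd p.1 i p.2) HR).
by apply: psd_ext.
Qed.

Lemma psd_Psi Q s R : (forall i, cpos (Q i)) -> psd R -> psd (Psi Q s R).
Proof. by move=> HQ HR; elim: s => //= i s IH; apply: psd_contr. Qed.

Lemma Psi_form Q s R a a' : uniq s ->
  Psi Q s R a a' = \sum_x \sum_x' ((agree s x a && agree s x' a')%:R *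
                      \prod_(i <- s) Q i (x i) (x' i)) * R x x'.
Proof.
elim: s a a' => [|i s IH] a a'.
  move=> _ /=; rewrite (bigD1 a) //= [X in _ + X]big1 => [|x nx]; last first.
    by apply: big1 => x' _; rewrite agree_nil (negbTE nx) !mul0r.
  rewrite addr0 (bigD1 a') //= [X in _ + X]big1 => [|x nx]; last first.
    by rewrite !agree_nil (negbTE nx) andbF !mul0r.
  by rewrite addr0 !agree_nil !eqxx big_nil mulr1 mul1r.
move=> /= /andP[nis us]; change (contr i (Q i) (Psi Q s R) a a' = \sum_x \sum_x' ((agree (i :: s) x a && agree (i :: s) x' a')%:R * \prod_(k <- i :: s) Q k (x k) (x' k)) * R x x'); rewrite /contr.
under eq_bigr => y _ do under eq_bigr => y' _ do rewrite IH // mulr_sumr.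
under eq_bigr => y _ do under eq_bigr => y' _ do under eq_bigr => x _ do rewrite mulr_sumr.
rewrite sum4_swap; apply: eq_bigr => x _; apply: eq_bigr => x' _.
have E : forall y y', agree s x (upd a i y) && agree s x' (upd a' i y') =
  ((x i == y) && agree (i::s) x a && ((x' i == y') && agree (i::s) x' a')).
  by move=> y y'; rewrite !agree_upd.
transitivity (\sum_y \sum_y' Q i y y' * (((x i == y) && agree (i::s) x a &&
   ((x' i == y') && agree (i::s) x' a'))%:R * \prod_(k <- s) Q k (x k) (x' k) * R x x')).
  by apply: eq_bigr => y _; apply: eq_bigr => y' _; rewrite E.
rewrite sum_delta2 big_cons; ring.
Qed.

Definition pair (I : finType) (Q R : op C I) : C := \sum_i \sum_i' Q i i' * R i i'.

Definition tensop (Q : forall i, op C (T i)) : op C (jt T) :=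
  fun j j' => \prod_i Q i (j i) (j' i).

Lemma tens_pos (Q : forall i, op C (T i)) R :
  (forall i, cpos (Q i)) -> psd R -> 0 <= pair (tensop Q) R.
Proof.
move=> HQ HR.
case: (pickP (fun _ : jt T => true)) => [a _|E]; last first.
  by rewrite /pair big1 // => x; have := E x.
have := psd_diag a (psd_Psi (index_enum 'I_N) HQ HR).
rewrite Psi_form ?index_enum_uniq //.
congr (_ <= _); apply: eq_bigr => x _; apply: eq_bigr => x' _.
by rewrite !agree_all mul1r.
Qed.

End Jt.

Section Tens.
Variable C : numClosedFieldType.
Variable N : nat.

Lemma pair_tens (A Bt : 'I_N -> finType) (F : forall i, superop C (A i) (Bt i))
  (Q : forall i, op C (Bt i)) (sigma : op C (jt A)) :
  pair (tensop Q) (apply (tens F) sigma) =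
  pair (tensop (fun i => dual (F i) (Q i))) sigma.
Proof.
have E1 : forall a a' : jt A, \prod_i dual (F i) (Q i) (a i) (a' i) =
   \sum_(J : jt Bt) \sum_(J' : jt Bt) (\prod_i Q i (J i) (J' i)) *
          \prod_i F i (J i) (J' i) (a i) (a' i).
  move=> a a'; rewrite /dual.
  rewrite -(dist_full (fun i y => \sum_y' Q i y y' * F i y y' (a i) (a' i))).
  apply: eq_bigr => J _.
  rewrite -(dist_full (fun i y' => Q i (J i) y' * F i (J i) y' (a i) (a' i))).
  apply: eq_bigr => J' _; by rewrite big_split.
rewrite /pair /tensop.
transitivity (\sum_(a : jt A) \sum_(a' : jt A) \sum_(J : jt Bt) \sum_(J' : jt Bt)
   (\prod_i Q i (J i) (J' i)) * \prod_i F i (J i) (J' i) (a i) (a' i) * sigma a a'); last first.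
  apply: eq_bigr => a _; apply: eq_bigr => a' _; rewrite E1 mulr_suml.
  by apply: eq_bigr => J _; rewrite mulr_suml.
rewrite sum4_swap; apply: eq_bigr => J _; apply: eq_bigr => J' _.
rewrite /apply /tens mulr_sumr; apply: eq_bigr => a _.
rewrite mulr_sumr; apply: eq_bigr => a' _; by rewrite mulrA.
Qed.

Lemma pair_idop (T : 'I_N -> finType) (R : op C (jt T)) :
  pair (tensop (fun i => @idop C (T i))) R = trace R.
Proof.
rewrite /pair /trace; apply: eq_bigr => j _.
rewrite (bigD1 j) //= [X in _ + X]big1 => [|j' nj].
  rewrite addr0 /tensop /idop big1 ?mul1r // => i _; by rewrite eqxx.
have [i ni] : exists i, j i != j' i.
  apply/existsP; move: nj; apply: contraR; rewrite negb_exists => /forallP Hj.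
  apply/eqP/ffunP => i; apply/esym/eqP; by move: (Hj i); rewrite negbK.
by rewrite /tensop (@bigD1 _ _ _ _ i) //= /idop (negbTE ni) !mul0r.
Qed.

End Tens.

Section Sesq.
Variable C : numClosedFieldType.
Variable I : finType.

Definition sf (T : op C I) (u w : vec C I) : C :=
  \sum_a \sum_a' T a a' * (u a * (w a')^*).

Lemma sf_ext T u u' w w' : (forall k, u k = u' k) -> (forall k, w k = w' k) ->
  sf T u w = sf T u' w'.
Proof.
by move=> Eu Ew; apply: eq_bigr => a _; apply: eq_bigr => a' _; rewrite Eu Ew.
Qed.

Lemma sf_expand T u w t :
  sf T (fun a => u a + t * w a) (fun a => u a + t * w a) =
  sf T u u + t^* * sf T u w + t * sf T w u + t * t^* * sf T w w.
Proof.
rewrite /sf !mulr_sumr -!big_split; apply: eq_bigr => a _.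
rewrite !mulr_sumr -!big_split; apply: eq_bigr => a' _ /=.
rewrite !rmorphD !rmorphM /=; ring.
Qed.

Lemma sf_herm T u w : (forall v, 0 <= sf T v v) -> sf T w u = (sf T u w)^*.
Proof.
move=> HT.
set a := sf T u w; set b := sf T w u.
have cu := geC0_conj (HT u); have cw := geC0_conj (HT w).
have E1 : a^* + b^* = a + b.
  have h := geC0_conj (HT (fun k => u k + 1 * w k)).
  rewrite sf_expand rmorph1 !mul1r !rmorphD /= cu cw -/a -/b in h.
  apply: (addrI (sf T u u)); apply: (addIr (sf T w w)); rewrite !addrA; exact: h.
have E2 : 'i * a^* + (- 'i) * b^* = - 'i * a + 'i * b.
  have h := geC0_conj (HT (fun k => u k + 'i * w k)).
  rewrite sf_expand conjCi mulrN -expr2 sqrCi opprK mul1r -/a -/b in h.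
  rewrite !rmorphD /= cu cw !rmorphM /= rmorphN /= conjCi opprK in h.
  move: h; rewrite -!addrA => /addrI; rewrite !addrA => /addIr.
  by rewrite mulNr.
have E3 : a^* - b^* = b - a.
  apply: (mulfI (neq0Ci C)); rewrite mulrBr -mulNr E2; ring.
have : 2%:R * (b - a^*) = 0.
  have -> : 2%:R * (b - a^*) = (a + b - (a^* + b^*)) - (a^* - b^* - (b - a)) by ring.
  by rewrite E1 E3 !subrr.
move/eqP; rewrite mulf_eq0 pnatr_eq0 /= subr_eq0 => /eqP //.
Qed.

Lemma sf_CS T u w : (forall v, 0 <= sf T v v) -> sf T u u = 0 -> sf T u w = 0.
Proof.
move=> HT Hu.
set a := sf T u w.
have hh := sf_herm u w HT.
set g := sf T w w; have g0 : 0 <= g := HT w.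
have g1 : 0 < g + 1 by rewrite ltr_wpDl.
set x := (g + 1)^-1.
have x0 : 0 < x by rewrite invr_gt0.
have xg : x * g - 2%:R < 0.
  rewrite subr_lt0; apply: (@le_lt_trans _ _ 1); last by rewrite ltr1n.
  by rewrite mulrC ler_pdivrMr // mul1r lerDl.
have P := HT (fun k => u k + (- (x * a)) * w k).
rewrite sf_expand Hu hh -/a -/g !rmorphN !rmorphM /= (geC0_conj (ltW x0)) in P.
have E : 0 + - (x * a^*) * a + - (x * a) * a^* + - (x * a) * - (x * a^*) * g =
  (a * a^*) * (x * (x * g - 2%:R)) by ring.
rewrite E in P.
have neg : x * (x * g - 2%:R) < 0 by rewrite pmulr_rlt0.
have : a * a^* == 0.
  have := mul_conjC_ge0 a; rewrite le_eqVlt => /orP[/eqP <- //|pos].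
  have h : a * a^* * (x * (x * g - 2%:R)) < 0 by rewrite pmulr_rlt0.
  by rewrite (lt_geF h) in P.
by rewrite mul_conjC_eq0 => /eqP.
Qed.

Lemma sf_sumL T (Bf : finType) (c : Bf -> C) (ps : Bf -> vec C I) w :
  sf T (fun k => \sum_b c b * ps b k) w = \sum_b c b * sf T (ps b) w.
Proof.
rewrite /sf.
transitivity (\sum_a \sum_a' \sum_b c b * (T a a' * (ps b a * (w a')^*))).
  apply: eq_bigr => a _; apply: eq_bigr => a' _.
  rewrite !mulr_suml mulr_sumr; apply: eq_bigr => b _; ring.
have -> : \sum_b c b * (\sum_a \sum_a' T a a' * (ps b a * (w a')^*)) =
    \sum_b \sum_a \sum_a' c b * (T a a' * (ps b a * (w a')^*)).
  apply: eq_bigr => b _; rewrite mulr_sumr; apply: eq_bigr => a _; by rewrite mulr_sumr.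
rewrite [RHS]exchange_big; apply: eq_bigr => a _; by rewrite [RHS]exchange_big.
Qed.

Definition ev (a : I) : vec C I := fun k => (k == a)%:R.

Lemma sf_delta T a a' : sf T (ev a) (ev a') = T a a'.
Proof.
rewrite /sf /ev (bigD1 a) //= [X in _ + X]big1 => [|k nk]; last first.
  by apply: big1 => k' _; rewrite (negbTE nk) mul0r mulr0.
rewrite addr0 (bigD1 a') //= [X in _ + X]big1 => [|k nk]; last first.
  by rewrite (negbTE nk) rmorph0 !mulr0.
by rewrite addr0 !eqxx conjC_nat /= mulr1n !mulr1.
Qed.

Lemma core (T : op C I) (Bf : finType) (ps : Bf -> vec C I) b0 :
  (forall b b', inner (ps b) (ps b') = (b == b')%:R) ->
  (forall v : vec C I, exists c : Bf -> C, forall k, v k = \sum_b c b * ps b k) ->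
  (forall v, 0 <= sf T v v) ->
  (forall b, b != b0 -> sf T (ps b) (ps b) = 0) ->
  sf T (ps b0) (ps b0) != 0 ->
  exists a0, exists kappa, kappa != 0 /\ forall a, T a a0 = (ps b0 a)^* * kappa.
Proof.
move=> Hon Hsp HT Hz Hnz.
have expand : forall v k, v k = \sum_b inner (ps b) v * ps b k.
  move=> v k; have [c Hc] := Hsp v; rewrite Hc; apply: eq_bigr => b _; congr (_ * _).
  rewrite /inner.
  transitivity (\sum_b' c b' * inner (ps b) (ps b')).
    by rewrite (bigD1 b) //= Hon eqxx mulr1 big1 ?addr0 // => b' nb; rewrite Hon eq_sym (negbTE nb) mulr0.
  rewrite /inner; under eq_bigr => b' _ do rewrite mulr_sumr.
  rewrite exchange_big /=; apply: eq_bigr => k' _; rewrite Hc mulr_sumr.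
  apply: eq_bigr => b' _; ring.
have key : forall a a', T a a' = (ps b0 a)^* * sf T (ps b0) (ev a').
  move=> a a'; rewrite -sf_delta (@sf_ext T (ev a) _ (ev a') (ev a') (expand (ev a))) //.
  rewrite sf_sumL (bigD1 b0) //= big1 ?addr0 => [|b nb]; last first.
    by rewrite (sf_CS _ HT (Hz b nb)) mulr0.
  congr (_ * _); rewrite /inner /ev (bigD1 a) //= eqxx mulr1 big1 ?addr0 // => k nk.
  by rewrite (negbTE nk) mulr0.
case: (boolP [exists a0, sf T (ps b0) (ev a0) != 0]) => [/existsP[a0 Ha0]|].
  by exists a0, (sf T (ps b0) (ev a0)); split => // a; rewrite key.
rewrite negb_exists => /forallP Hall; exfalso; move/negP: Hnz; apply.
apply/eqP; apply: big1 => a _; apply: big1 => a' _.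
by rewrite key; move: (Hall a'); rewrite negbK => /eqP ->; rewrite mulr0 mul0r.
Qed.

End Sesq.

Arguments nR {C N H B} _.
Arguments K {C N H B} _ _ _.
Arguments X {C N H B} _ _ _.
Arguments Y {C N H B} _ _ _.
Arguments M {C N H B} _ _ _ _ _ _ _ _ _.
Arguments g0 {C N H B} _ _.
Arguments G {C N H B} _ _ _ _.
Arguments P {C N H B} _ _ _.
Arguments M_CP {C N H B} _ _ _ _ _.
Arguments g0_ge0 {C N H B} _ _.
Arguments G_ge0 {C N H B} _ _ _ _.
Arguments P_ge0 {C N H B} _ _ _.
Arguments lstate {C N H B} _ _ _ _ _ _.

Section Main.
Variable C : numClosedFieldType.
Variable N : nat.
Variable H : 'I_N -> finType.
Variable B : finType.
Variable psi : B -> vec C (jt H).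

Definition Good (f : op C (jt H) -> C) : Prop :=
  (forall v, 0 <= f (proj v)) /\
  (forall b0, (forall b, b != b0 -> f (proj (psi b)) = 0) ->
     f (proj (psi b0)) != 0 -> is_product (psi b0)).

Lemma Good_eq f g : (forall rho, f rho = g rho) -> Good g -> Good f.
Proof.
move=> E [G1 G2]; split => [v|b0 Hz Hnz]; first by rewrite E.
by apply: G2 => [b nb|]; rewrite -E //; apply: Hz.
Qed.

Lemma Good_sum (Tt : finType) (w : Tt -> C) (F : Tt -> op C (jt H) -> C) :
  (forall t, 0 <= w t) -> (forall t, Good (F t)) ->
  Good (fun rho => \sum_t w t * F t rho).
Proof.
move=> Hw HF; split => [v|b0 Hz Hnz].
  by apply: sumr_ge0 => t _; apply: mulr_ge0 => //; case: (HF t).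
have Hz' : forall b, b != b0 -> forall t, w t * F t (proj (psi b)) = 0.
  move=> b nb t; apply/eqP; move: t; apply/forallP.
  have := Hz b nb => /eqP; rewrite psumr_eq0 => [/allP Ha|t _]; last first.
    by apply: mulr_ge0 => //; case: (HF t).
  by apply/forallP => t; apply: (Ha t); rewrite mem_index_enum.
case: (boolP [exists t, w t * F t (proj (psi b0)) != 0]) => [/existsP[t Ht]|].
  case: (HF t) => _; apply => [b nb|].
    by have := Hz' b nb t => /eqP; rewrite mulf_eq0 => /orP[/eqP w0|/eqP //];
       move: Ht; rewrite w0 mul0r eqxx.
  by move: Ht; rewrite mulf_eq0 negb_or => /andP[].
rewrite negb_exists => /forallP Hall; move/negP: Hnz; case.
by apply/eqP; apply: big1 => t _; move: (Hall t); rewrite negbK => /eqP.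
Qed.

Lemma Good_base (Q : forall i, op C (H i)) :
  (0 < N)%N -> orthonormal_basis psi -> (forall i, cpos (Q i)) ->
  Good (fun rho => pair (tensop Q) rho).
Proof.
move=> hN [Hon Hsp] HQ; split => [v|b0 Hz Hnz].
  exact: tens_pos HQ (psd_proj v).
have [a0 [kappa [k0 key]]] := core Hon Hsp (fun v => tens_pos HQ (psd_proj v)) Hz Hnz.
pose i0 : 'I_N := Ordinal hN.
have ck0 : kappa^* != 0 by rewrite conjC_eq0.
exists (fun i x => (Q i x (a0 i))^* * (if i == i0 then (kappa^*)^-1 else 1)) => a.
rewrite big_split /=.
have -> : \prod_(i < N) (if i == i0 then (kappa^*)^-1 else 1) = (kappa^*)^-1.
  rewrite (bigD1 i0) //= big1 ?mulr1 // => i /negbTE ->; done.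
have h := congr1 (@Num.conj_op C) (key a).
rewrite rmorphM /= conjCK /tensop rmorph_prod /= in h.
by rewrite h mulfK.
Qed.


Lemma pair_sumw (I Tt : finType) (Q : op C I) (w : Tt -> C) (R : Tt -> op C I) :
  pair Q (fun j j' => \sum_t w t * R t j j') = \sum_t w t * pair Q (R t).
Proof.
rewrite /pair; transitivity (\sum_j \sum_j' \sum_t w t * (Q j j' * R t j j')).
  apply: eq_bigr => j _; apply: eq_bigr => j' _; rewrite mulr_sumr.
  apply: eq_bigr => t _; ring.
under eq_bigr => j _ do rewrite exchange_big /=.
rewrite exchange_big /=; apply: eq_bigr => t _; rewrite mulr_sumr.
by apply: eq_bigr => j _; rewrite mulr_sumr.
Qed.

Lemma pair_sumw2 (I T1 T2 : finType) (Q : op C I) (w : T1 -> T2 -> C) (R : T1 -> T2 -> op C I) :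
  pair Q (fun j j' => \sum_t1 \sum_t2 w t1 t2 * R t1 t2 j j') =
  \sum_t1 \sum_t2 w t1 t2 * pair Q (R t1 t2).
Proof.
transitivity (pair Q (fun j j' => \sum_(t : T1 * T2) w t.1 t.2 * R t.1 t.2 j j')).
  by rewrite /pair; apply: eq_bigr => j _; apply: eq_bigr => j' _; rewrite pair_bigA.
by rewrite pair_sumw pair_bigA.
Qed.

Lemma Good_lstate (hN : (0 < N)%N) (hB : orthonormal_basis psi) (p : LOCC C N H B) r :
  forall (y : jt (fun i => Y p i r)) (Q : forall i, op C (K p i r)),
  (forall i, cpos (Q i)) -> Good (fun rho => pair (tensop Q) (lstate p rho r y)).
Proof.
elim: r => [|r IH] y Q HQ.
  apply: (@Good_eq _ (fun rho => \sum_x g0 p x *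
     pair (tensop (fun i => dual (M p i 0 (x i) (y i)) (Q i))) rho)).
    move=> rho; rewrite [LHS](pair_sumw (tensop Q) (g0 p)
       (fun x => apply (tens (fun i => M p i 0 (x i) (y i))) rho)).
    by apply: eq_bigr => x _; rewrite pair_tens.
  apply: Good_sum => [x|x]; first exact: g0_ge0.
  apply: Good_base => // i; apply: (cpos_dual (M_CP p i 0 (x i) (y i))); exact: HQ.
apply: (@Good_eq _ (fun rho => \sum_x 1 * \sum_y' G p r x y' *
     pair (tensop (fun i => dual (M p i r.+1 (x i) (y i)) (Q i))) (lstate p rho r y'))).
  move=> rho; rewrite [LHS](pair_sumw2 (tensop Q) (G p r)
       (fun x y' => apply (tens (fun i => M p i r.+1 (x i) (y i))) (lstate p rho r y'))).
  apply: eq_bigr => x _; rewrite mul1r; apply: eq_bigr => y' _; by rewrite pair_tens.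
apply: Good_sum => [x|x]; first exact: ler01.
apply: Good_sum => [y'|y']; first exact: G_ge0.
apply: IH => i; apply: (cpos_dual (M_CP p i r.+1 (x i) (y i))); exact: HQ.
Qed.

Lemma Good_out (hN : (0 < N)%N) (hB : orthonormal_basis psi) (p : LOCC C N H B) b :
  Good (fun rho => LOCC_out p rho b).
Proof.
apply: (@Good_eq _ (fun rho => \sum_y P p b y *
   pair (tensop (fun i => @idop C (K p i (nR p)))) (lstate p rho (nR p) y))).
  by move=> rho; rewrite /LOCC_out; apply: eq_bigr => y _; rewrite pair_idop.
apply: Good_sum => [y|y]; first exact: P_ge0.
apply: Good_lstate => // i; exact: cpos_idop.
Qed.

Lemma part1 (hN : (0 < N)%N) (hB : orthonormal_basis psi) :
  (exists p : LOCC C N H B, perfectly_distinguishes p psi) -> forall b, is_product (psi b).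
Proof.
move=> [p Hp] b0; have [_ G2] := Good_out hN hB p b0.
apply: G2 => [b nb|]; first by rewrite Hp eq_sym (negbTE nb).
by rewrite Hp eqxx oner_neq0.
Qed.

End Main.

Section Part2.
Variable C : numClosedFieldType.

Lemma psd_zero (I : finType) (R : op C I) : (forall i i', R i i' = 0) -> psd R.
Proof.
move=> HR v; rewrite big1 // => i _; rewrite big1 // => i' _; by rewrite HR mulr0 mul0r.
Qed.

Lemma CP_zero (I J : finType) : CP (fun (_ _ : J) (_ _ : I) => 0 : C).
Proof. move=> n rho _; apply: psd_zero => p p'; rewrite /ampl big1 // => i _; rewrite big1 // => i' _; by rewrite mul0r. Qed.

Lemma sum_pair (I J : finType) (F : I * J -> C) :
  \sum_(p : I * J) F p = \sum_i \sum_j F (i, j).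
Proof. by rewrite pair_bigA; apply: eq_bigr => -[i j]. Qed.

Lemma cpos_rank1 (I : finType) (phi : vec C I) : cpos (fun x x' => (phi x)^* * phi x').
Proof.
move=> A rho Hr v.
have := Hr (fun q => v q.1 * phi q.2).
suff -> : \sum_a \sum_a' (v a)^* * (\sum_x \sum_x' (phi x)^* * phi x' * rho (a, x) (a', x')) * v a' =
  \sum_(q : A * I) \sum_(q' : A * I) (v q.1 * phi q.2)^* * rho q q' * (v q'.1 * phi q'.2) by [].
rewrite sum_pair; apply: eq_bigr => a _.
transitivity (\sum_a' \sum_x \sum_x' (v a * phi x)^* * rho (a,x) (a',x') * (v a' * phi x')).
  apply: eq_bigr => a' _; rewrite mulr_sumr mulr_suml; apply: eq_bigr => x _.
  rewrite mulr_sumr mulr_suml; apply: eq_bigr => x' _; rewrite rmorphM /=; ring.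
rewrite exchange_big; apply: eq_bigr => x _; by rewrite sum_pair.
Qed.

Lemma CP_rank1 (I : finType) (phi : vec C I) :
  CP (fun (_ _ : unit) a a' => (phi a)^* * phi a' : C).
Proof.
move=> n rho Hr.
have := psd_pull (fun p : 'I_n * unit => p.1) (cpos_rank1 phi Hr).
by apply: psd_ext.
Qed.

Lemma inner_sq (I : finType) (u w : vec C I) :
  \sum_a \sum_a' ((u a)^* * u a') * (w a * (w a')^*) = inner u w * (inner u w)^*.
Proof.
rewrite /inner rmorph_sum mulr_suml; apply: eq_bigr => a _.
rewrite mulr_sumr; apply: eq_bigr => a' _; rewrite rmorphM /= conjCK; ring.
Qed.

End Part2.

Section Proto.
Local Unset Implicit Arguments.
Variable C : numClosedFieldType.
Variable N : nat.
Variable H : 'I_N -> finType.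
Variable B : finType.
Variable phi : B -> forall i, vec C (H i).

Definition Kc : 'I_N -> nat -> finType := fun _ _ => unit.
Definition Xc : 'I_N -> nat -> finType := fun _ _ => B.

Definition Mc (i : 'I_N) (r : nat) : Xc i r -> Xc i r -> superop C (Qsys H Kc i r) (Kc i r) :=
  match r as r0 return Xc i r0 -> Xc i r0 -> superop C (Qsys H Kc i r0) (Kc i r0) with
  | 0 => fun x y => fun _ _ a a' => if x == y then (phi x i a)^* * phi x i a' else 0
  | r'.+1 => fun _ _ => fun _ _ _ _ => 0
  end.

Lemma Mc_CP i r x y : CP (Mc i r x y).
Proof.
case: r x y => [|r] x y /=; last exact: CP_zero.
case: (x == y); [exact: CP_rank1 | exact: CP_zero].
Qed.

Definition g0c : jt (fun i => Xc i 0) -> C := fun _ => 1.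
Definition Gc (r : nat) : jt (fun i => Xc i r.+1) -> jt (fun i => Xc i r) -> C := fun _ _ => 0.
Definition Pc : B -> jt (fun i => Xc i 0) -> C := fun b y => [forall i, y i == b]%:R.

Definition proto : LOCC C N H B :=
  @Build_LOCC C N H B 0 Kc Xc Xc Mc g0c Gc Pc Mc_CP
    (fun _ => ler01) (fun _ _ _ => lexx _) (fun _ _ => ler0n _ _).


Lemma ex_diff (x y : jt (fun i => Xc i 0)) : x != y -> exists i, x i != y i.
Proof.
move=> nxy; apply/existsP; move: nxy; apply: contraR; rewrite negb_exists => /forallP Hj.
apply/eqP/ffunP => i; apply/eqP; by move: (Hj i); rewrite negbK.
Qed.

Lemma proto_trace (rho : op C (jt H)) y :
  trace (lstate proto rho 0 y) =
  \sum_(a : jt H) \sum_(a' : jt H) (\prod_i ((phi (y i) i (a i))^* * phi (y i) i (a' i))) * rho a a'.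
Proof.
pose j0 : jt (fun i => Kc i 0) := finfun (fun i => tt : Kc i 0).
rewrite /trace (big_pred1 j0) => [|j]; last first.
  apply/esym/eqP/ffunP => i; rewrite /j0 ffunE; by case: (j i).
rewrite /= (bigD1 y) //= big1 => [|x nx]; last first.
  have [i ni] := ex_diff _ _ nx.
  rewrite /g0c mul1r /apply big1 // => a _; rewrite big1 // => a' _.
  by rewrite /tens (bigD1 i) //= (negbTE ni) !mul0r.
rewrite addr0 /g0c mul1r /apply; apply: eq_bigr => a _; apply: eq_bigr => a' _.
by rewrite /tens; congr (_ * _); apply: eq_bigr => i _; rewrite eqxx.
Qed.

Lemma proto_out (rho : op C (jt H)) b :
  LOCC_out proto rho b =
  \sum_(a : jt H) \sum_(a' : jt H) (\prod_i ((phi b i (a i))^* * phi b i (a' i))) * rho a a'.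
Proof.
rewrite /LOCC_out.
under eq_bigr => y _ do rewrite proto_trace.
pose yb : jt (fun i => Xc i 0) := finfun (fun i => b : Xc i 0).
rewrite (bigD1 yb) //= [X in _ + X]big1 => [|y ny]; last first.
  rewrite /Pc; case: (boolP [forall i, y i == b]) => [/forallP Hy|]; last by rewrite mul0r.
  move: ny; have -> : y = yb by apply/ffunP => i; rewrite /yb ffunE; apply/eqP; exact: Hy.
  by rewrite eqxx.
rewrite addr0 /Pc; have -> : [forall i, yb i == b] by apply/forallP => i; rewrite /yb ffunE.
rewrite mul1r; apply: eq_bigr => a _; apply: eq_bigr => a' _.
by congr (_ * _); apply: eq_bigr => i _; rewrite /yb ffunE.
Qed.

End Proto.

Lemma part2 (C : numClosedFieldType) (N : nat) (H : 'I_N -> finType)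
  (B : finType) (psi : B -> vec C (jt H)) :
  orthonormal_basis psi -> (forall b, is_product (psi b)) ->
  exists p : LOCC C N H B, unital_LOCC p /\ perfectly_distinguishes p psi.
Proof.
move=> [Hon _] hprod.
pose phi b := proj1_sig (constructive_indefinite_description _ (hprod b)).
have Hphi : forall b k, psi b k = \prod_i phi b i (k i).
  move=> b; exact: (proj2_sig (constructive_indefinite_description _ (hprod b))).
exists (proto C N H B phi).
have Hout : forall rho b, LOCC_out (proto C N H B phi) rho b =
    \sum_a \sum_a' ((psi b a)^* * psi b a') * rho a a'.
  move=> rho b; rewrite proto_out; apply: eq_bigr => a _; apply: eq_bigr => a' _.
  by rewrite !Hphi big_split /= rmorph_prod.
split.
  move=> b; rewrite Hout; transitivity (inner (psi b) (psi b)); last by rewrite Hon eqxx.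
  rewrite /inner; apply: eq_bigr => a _.
  rewrite (bigD1 a) //= big1 ?addr0 => [|a' na]; last by rewrite /idop eq_sym (negbTE na) mulr0.
  by rewrite /idop eqxx mulr1.
move=> b b'; rewrite Hout /proj inner_sq Hon conjC_nat.
by case: (b' == b); rewrite ?mulr1 ?mulr0.
Qed.

Unset Implicit Arguments.

Theorem theorem1 (C : numClosedFieldType) (N : nat) (H : 'I_N -> finType)
  (B : finType) (psi : B -> vec C (jt H)) :
  (0 < N)%N ->
  #|B| = (\prod_(j < N) #|H j|)%N ->
  orthonormal_basis psi ->
  ((exists p : LOCC C N H B, perfectly_distinguishes p psi) ->
      forall b, is_product (psi b)) /\
  ((forall b, is_product (psi b)) ->
      exists p : LOCC C N H B, unital_LOCC p /\ perfectly_distinguishes p psi).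
Proof.
move=> hN _ hB; split; first exact: part1.
by move=> hp; apply: part2.
Qed.
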